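(* Consider the inhomogeneous stochastic higher spin six vertex model in the quadrant $\mathbb{Z}_{\ge1}^2$ with the step boundary condition and parameters $u_1,u_2,\ldots\in(-\infty,0)$, $a_1,a_2,\ldots\in(0,+\infty)$, $\nu_1,\nu_2,\ldots\in(0,1)$, where the $a_i$'s and the $\nu_i$'s are uniformly bounded away from the endpoints of their respective intervals. Then for each $T=1,2,\ldots$, almost surely there are exactly $T$ up-right paths crossing the horizontal line at height $T+\frac12$ (equivalently, the total number of arrows on the vertical edges from $(x,T)$ to $(x,T+1)$, $x\ge1$, equals $T$); in other words, paths cannot stay horizontal forever.
   Context: Fix $q\in(0,1)$. For parameters $u,a,\nu$ define stochastic vertex weights $\mathsf{L}_{u,a,\nu}(i_1,j_1;i_2,j_2)$, $i_1,i_2\in\mathbb{Z}_{\ge0}$, $j_1,j_2\in\{0,1\}$ (here $i_1,j_1$ are the numbers of arrows entering a vertex from below and from the left, $i_2,j_2$ the numbers leaving upwards and to the right), which vanish unless $i_1+j_1=i_2+j_2$, and for $g\in\mathbb{Z}_{\ge0}$: $\mathsf{L}(g,0;g,0)=\frac{1-auq^g}{1-au}$, $\mathsf{L}(g,0;g-1,1)=\frac{-au(1-q^g)}{1-au}$, $\mathsf{L}(g,1;g,1)=\frac{\nu q^g-au}{1-au}$, $\mathsf{L}(g,1;g+1,0)=\frac{1-\nu q^g}{1-au}$. The stochastic higher spin six vertex model with the step boundary condition is the random collection of up-right paths in $\mathbb{Z}_{\ge1}^2$ (paths may share vertices and vertical edges, so vertical edges carry any number of arrows, but each horizontal edge carries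 at most one arrow) defined as follows: one arrow enters each vertex $(1,T)$, $T\ge1$, from the left, and no arrow enters any vertex $(N,1)$ from below. Inductively over $n=2,3,\ldots$, for each vertex $(N,T)$ with $N+T=n$, given the numbers $(i_1,j_1)$ of arrows entering it from below and from the left, the outgoing numbers $(i_2,j_2)$ are sampled independently with probabilities $\mathsf{L}_{u_T,a_N,\nu_N}(i_1,j_1;i_2,j_2)$. *)

(* Defs.v *)
From HB Require Import structures.
From mathcomp Require Import all_boot all_order all_algebra.
From mathcomp Require Import all_classical all_reals all_analysis.
Set Implicit Arguments.
Unset Strict Implicit.
Unset Printing Implicit Defensive.
Import Order.TTheory GRing.Theory Num.Theory.
Local Open Scope ring_scope.

(* Stochastic vertex weight L_{u,a,nu}(i1,j1;i2,j2):
   i1 = arrows entering from below, j1 = from the left,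
   i2 = arrows leaving upwards,    j2 = to the right. *)
Definition Lweight (R : realType) (q u a nu : R) (i1 j1 i2 j2 : nat) : R :=
  if (i1 + j1)%N != (i2 + j2)%N then 0 else
  match j1, j2 with
  | 0%N, 0%N => (1 - a * u * q ^+ i1) / (1 - a * u)
  | 0%N, 1%N => (- (a * u) * (1 - q ^+ i1)) / (1 - a * u)
  | 1%N, 1%N => (nu * q ^+ i1 - a * u) / (1 - a * u)
  | 1%N, 0%N => (1 - nu * q ^+ i1) / (1 - a * u)
  | _, _ => 0
  end.

(* Number of arrows entering vertex (x,t) from below, given the vertical
   outputs v (v x t = arrows on edge (x,t)->(x,t+1)); step boundary:
   no arrow enters (x,1) from below. *)
Definition in_below (v : nat -> nat -> nat) (x t : nat) : nat :=
  if t == 1%N then 0%N else v x t.-1.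

(* Number of arrows entering vertex (x,t) from the left, given the horizontal
   outputs h (h x t = arrows on edge (x,t)->(x+1,t)); step boundary:
   one arrow enters each (1,t) from the left. *)
Definition in_left (h : nat -> nat -> nat) (x t : nat) : nat :=
  if x == 1%N then 1%N else h x.-1 t.

(* Probability (product of the stochastic weights, sampled sequentially along
   the anti-diagonals) of the configuration (v,h) restricted to the box
   [1,N] x [1,T] of the quadrant: vertex (x,t) uses L_{u_t, a_x, nu_x}. *)
Definition box_weight (R : realType) (q : R) (u a nu : nat -> R)
    (N T : nat) (v h : nat -> nat -> nat) : R :=
  \prod_(1 <= x < N.+1) \prod_(1 <= t < T.+1)
     Lweight q (u t) (a x) (nu x) (in_below v x t) (in_left h x t) (v x t) (h x t).

(* Main.v *)
Require Import Defs.
From HB Require Import structures.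
From mathcomp Require Import all_boot all_order all_algebra.
From mathcomp Require Import all_classical all_reals all_analysis.
From mathcomp Require Import zify ring lra.
Import Order.TTheory GRing.Theory Num.Theory.
Local Open Scope classical_set_scope.
Local Open Scope ring_scope.

Lemma Lweight_cons (R : realType) (q u a nu : R) i1 j1 i2 j2 :
  Lweight q u a nu i1 j1 i2 j2 != 0 -> (i1 + j1 = i2 + j2)%N.
Proof.
rewrite /Lweight; case: ifP => [_|/negbFE/eqP//]; by rewrite eqxx.
Qed.

Lemma Lweight_j2 (R : realType) (q u a nu : R) i1 j1 i2 j2 :
  (2 <= j2)%N -> Lweight q u a nu i1 j1 i2 j2 = 0.
Proof.
rewrite /Lweight; case: ifP => // _.
by case: j2 => [|[|j2]] //; case: j1 => [|[|j1]].
Qed.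

Lemma box_weight_ext (R : realType) (q : R) u a nu N T v h v' h' :
  (forall x t, (1 <= x <= N)%N -> (1 <= t <= T)%N -> v x t = v' x t /\ h x t = h' x t) ->
  box_weight q u a nu N T v h = box_weight q u a nu N T v' h'.
Proof.
move=> E; apply: eq_big_nat => x /andP[x1 xN]; apply: eq_big_nat => t /andP[t1 tT].
have [-> ->] := E x t ltac:(lia) ltac:(lia).
rewrite /in_below /in_left.
have [t1'|t1'] := eqVneq t 1%N; have [x1'|x1'] := eqVneq x 1%N => //.
- by have [_ ->] := E x.-1 t ltac:(lia) ltac:(lia).
- by have [-> _] := E x t.-1 ltac:(lia) ltac:(lia).
- by have [-> _] := E x t.-1 ltac:(lia) ltac:(lia); have [_ ->] := E x.-1 t ltac:(lia) ltac:(lia).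
Qed.

Lemma box_weight_eq0 (R : realType) (q : R) u a nu N T v h x t :
  (1 <= x <= N)%N -> (1 <= t <= T)%N ->
  Lweight q (u t) (a x) (nu x) (in_below v x t) (in_left h x t) (v x t) (h x t) = 0 ->
  box_weight q u a nu N T v h = 0.
Proof.
move=> hx ht H0; rewrite /box_weight (bigD1_seq x) /=; last first.
- exact: iota_uniq.
- by rewrite mem_index_iota; lia.
rewrite (bigD1_seq t) /=; last first.
- exact: iota_uniq.
- by rewrite mem_index_iota; lia.
by rewrite H0 !mul0r.
Qed.

Lemma col_id (v h : nat -> nat -> nat) x T :
  (1 <= T)%N ->
  (forall t, (1 <= t <= T)%N -> (in_below v x t + in_left h x t = v x t + h x t)%N) ->
  (\sum_(1 <= t < T.+1) in_left h x t = v x T + \sum_(1 <= t < T.+1) h x t)%N.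
Proof.
case: T => [//|n] _; elim: n => [|n IH] C.
  rewrite !big_nat1; have := C 1%N erefl; by rewrite /in_below eqxx.
rewrite big_nat_recr //= [X in _ = (_ + X)%N]big_nat_recr //=.
rewrite IH; last by move=> t ht; apply: C; lia.
have := C n.+2 ltac:(lia); rewrite /in_below /=.
lia.
Qed.

Lemma sum_id (v h : nat -> nat -> nat) M T :
  (1 <= T)%N -> (1 <= M)%N ->
  (forall x t, (1 <= x <= M)%N -> (1 <= t <= T)%N ->
     (in_below v x t + in_left h x t = v x t + h x t)%N) ->
  (\sum_(1 <= x < M.+1) v x T + \sum_(1 <= t < T.+1) h M t = T)%N.
Proof.
move=> T1; case: M => [//|m] _; elim: m => [|m IH] C.
  rewrite big_nat1 -col_id //; last by move=> t ht; apply: C; lia.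
  rewrite /in_left eqxx sum_nat_const_nat; lia.
rewrite big_nat_recr //= -addnA -col_id //; last by move=> t ht; apply: C; lia.
rewrite /in_left /=.
apply: IH => x t hx ht; apply: C; lia.
Qed.

Lemma zero_prop (v h : nat -> nat -> nat) x T :
  (1 <= T)%N -> (1 <= x)%N ->
  (forall t, (1 <= t <= T)%N -> (in_below v x.+1 t + in_left h x.+1 t = v x.+1 t + h x.+1 t)%N) ->
  (\sum_(1 <= t < T.+1) h x t = 0)%N -> (\sum_(1 <= t < T.+1) h x.+1 t = 0)%N.
Proof.
move=> T1 x1 C; have := @col_id v h x.+1 T T1 C.
have -> : (\sum_(1 <= t < T.+1) in_left h x.+1 t = \sum_(1 <= t < T.+1) h x t)%N.
  by apply: eq_bigr => t _; rewrite /in_left; case: x x1 {C}.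
lia.
Qed.
Lemma Lw_lb (R : realType) (q u a nu e1 e2 : R) g j :
 0 < q < 1 -> u < 0 -> 0 < e1 -> e1 <= a <= e1^-1 -> 0 < e2 -> e2 <= nu <= 1 - e2 ->
 (j <= 1)%N ->
 e2 * (e1 / (e1 - u)) <= Lweight q u a nu g j (g + j) 0.
Proof.
move=> /andP[q0 q1] u0 e10 /andP[e1a ae1] e20 /andP[e2nu nue2] j1.
have qg0 : 0 <= q ^+ g by apply: exprn_ge0; lra.
have qg1 : q ^+ g <= 1 by apply: exprn_ile1; lra.
have ea1 : e1 * a <= 1.
  by rewrite -(mulfV (lt0r_neq0 e10)); apply: ler_wpM2l; lra.
have a0 : 0 < a by lra.
have D0 : 0 < 1 - a * u by nra.
have eu0 : 0 < e1 - u by lra.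
have key : e1 / (e1 - u) <= (1 - a * u)^-1.
  rewrite ler_pdivrMr // mulrC ler_pdivlMr //; nra.
have h0 : 0 <= e1 / (e1 - u) by apply: divr_ge0; lra.
rewrite /Lweight addn0 eqxx /=.
case: j j1 => [|[|//]] _ /=; apply: ler_pM => //; try lra.
- have : 0 <= a * u * q ^+ g * (-1).
    by rewrite mulrN1 oppr_ge0; apply: mulr_le0_ge0 => //; nra.
  lra.
- nra.
Qed.
Set Implicit Arguments.
Unset Strict Implicit.
Definition cfg (Omega : Type) (V H : nat -> nat -> Omega -> nat) (N T : nat) (w : Omega)
  : {ffun 'I_N * 'I_T -> nat * nat} :=
  [ffun p : 'I_N * 'I_T => ((V (nat_of_ord p.1).+1 (nat_of_ord p.2).+1 w, H (nat_of_ord p.1).+1 (nat_of_ord p.2).+1 w) : nat * nat)].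

Definition agree (Omega : Type) (V H : nat -> nat -> Omega -> nat) (N T : nat) (w w' : Omega) :=
  forall x t, (1 <= x <= N)%N -> (1 <= t <= T)%N -> V x t w' = V x t w /\ H x t w' = H x t w.

Definition boxev (Omega : Type) (V H : nat -> nat -> Omega -> nat) (N T : nat)
  (v h : nat -> nat -> nat) :=
  [set w | forall x t, (1 <= x <= N)%N -> (1 <= t <= T)%N ->
                  V x t w = v x t /\ H x t w = h x t].

Definition atom (Omega : Type) (V H : nat -> nat -> Omega -> nat) (N T : nat) (n : nat) :=
  [set w | pickle (cfg V H N T w) = n].

Definition bdet (Omega : Type) (V H : nat -> nat -> Omega -> nat) (N T : nat) (E : set Omega) :=
  forall w w', agree V H N T w w' -> E w -> E w'.

Lemma cfgP (Omega : Type) (V H : nat -> nat -> Omega -> nat) N T w w' :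
  cfg V H N T w = cfg V H N T w' <-> agree V H N T w w'.
Proof.
split.
- move=> E x t hx ht.
  have hx' : (x.-1 < N)%N by lia.
  have ht' : (t.-1 < T)%N by lia.
  have := congr1 (fun f : {ffun 'I_N * 'I_T -> nat * nat} => f (Ordinal hx', Ordinal ht')) E; rewrite !ffunE /=.
  have -> : x.-1.+1 = x by lia.
  have -> : t.-1.+1 = t by lia.
  by case=> -> ->.
- move=> A; apply/ffunP => -[i j]; rewrite !ffunE /=.
  have hi := ltn_ord i; have hj := ltn_ord j.
  have [-> ->] := A i.+1 j.+1 ltac:(lia) ltac:(lia); done.
Qed.

Lemma atomE (Omega : Type) (V H : nat -> nat -> Omega -> nat) N T n w0 :
  atom V H N T n w0 ->
  atom V H N T n = boxev V H N T (fun x t => V x t w0) (fun x t => H x t w0).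
Proof.
move=> a0; apply/seteqP; split => w /=.
- move=> aw; have : cfg V H N T w0 = cfg V H N T w.
    by apply: (pcan_inj pickleK); rewrite /atom /= in a0 aw; rewrite a0 aw.
  by move/cfgP.
- move=> A; rewrite /atom /=; rewrite /atom /= in a0; rewrite -a0; congr pickle.
  by apply/esym/cfgP.
Qed.

Lemma boxev_meas d (Omega : measurableType d) (V H : nat -> nat -> Omega -> nat)
  (mV : forall x t k, measurable [set w | V x t w = k])
  (mH : forall x t k, measurable [set w | H x t w = k]) N T v h :
  measurable (boxev V H N T v h).
Proof.
pose B x t := if (1 <= x <= N)%N && (1 <= t <= T)%N then
   [set w | V x t w = v x t] `&` [set w | H x t w = h x t] else setT.
have -> : boxev V H N T v h = \bigcap_x \bigcap_t B x t.
  apply/seteqP; split => w /=.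
  - move=> A x _ t _; rewrite /B; case: ifP => // /andP[hx ht].
    by have [? ?] := A x t hx ht; split.
  - move=> A x t hx ht; have := A x I t I; rewrite /B hx ht /=; by case.
apply: bigcapT_measurable => x; apply: bigcapT_measurable => t.
rewrite /B; case: ifP => _; [apply: measurableI|exact: measurableT].
  exact: mV.
exact: mH.
Qed.

Lemma atom_meas d (Omega : measurableType d) (V H : nat -> nat -> Omega -> nat)
  (mV : forall x t k, measurable [set w | V x t w = k])
  (mH : forall x t k, measurable [set w | H x t w = k]) N T n :
  measurable (atom V H N T n).
Proof.
have [[w0 a0]|no] := pselect (exists w0, atom V H N T n w0).
  by rewrite (atomE a0); exact: boxev_meas.
have -> : atom V H N T n = set0.
  by apply/seteqP; split => w // aw; exfalso; apply: no; exists w.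
exact: measurable0.
Qed.

Lemma bdet_meas d (Omega : measurableType d) (V H : nat -> nat -> Omega -> nat)
  (mV : forall x t k, measurable [set w | V x t w = k])
  (mH : forall x t k, measurable [set w | H x t w = k]) N T E :
  bdet V H N T E -> measurable E.
Proof.
move=> bE.
have -> : E = \bigcup_(n in [set n | exists w, E w /\ atom V H N T n w]) atom V H N T n.
  apply/seteqP; split => w /=.
  - move=> Ew; exists (pickle (cfg V H N T w)) => //; exists w; split => //.
  - move=> [n [w0 [Ew0 a0]] aw]; rewrite (atomE a0) in aw.
    exact: (bE w0 w aw Ew0).
apply: bigcup_measurable => n _; exact: atom_meas.
Qed.

Lemma part_sum d (Omega : measurableType d) (R : realType) (P : probability Omega R)
  (V H : nat -> nat -> Omega -> nat)
  (mV : forall x t k, measurable [set w | V x t w = k])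
  (mH : forall x t k, measurable [set w | H x t w = k]) N T E :
  measurable E ->
  P E = (\sum_(n <oo | n \in [set: nat]) P (E `&` atom V H N T n))%E.
Proof.
move=> mE.
transitivity (P (\bigcup_(n in [set: nat]) (E `&` atom V H N T n))).
  congr (P _); apply/seteqP; split => w /=.
  - by move=> Ew; exists (pickle (cfg V H N T w)) => //.
  - by move=> [n _ []].
apply: measure_bigcup.
- by move=> n _; apply: measurableI => //; exact: atom_meas.
- move=> i j _ _ [w [[_ ai] [_ aj]]]; by rewrite -ai -aj.
Qed.

Unset Implicit Arguments.
Set Strict Implicit.

Theorem lemma3p1 (R : realType) (q : R) (u a nu : nat -> R)
  (d : measure_display) (Omega : measurableType d) (P : probability Omega R)
  (V H : nat -> nat -> Omega -> nat) :
  0 < q < 1 ->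
  (forall t, (1 <= t)%N -> u t < 0) ->
  (exists2 eps : R, 0 < eps &
     forall x, (1 <= x)%N -> eps <= a x <= eps^-1) ->
  (exists2 eps : R, 0 < eps &
     forall x, (1 <= x)%N -> eps <= nu x <= 1 - eps) ->
  (forall x t k, measurable [set w | V x t w = k]) ->
  (forall x t k, measurable [set w | H x t w = k]) ->
  (forall (N T : nat) (v h : nat -> nat -> nat),
     P [set w | forall x t, (1 <= x <= N)%N -> (1 <= t <= T)%N ->
                  V x t w = v x t /\ H x t w = h x t]
     = (box_weight q u a nu N T v h)%:E) ->
  forall T : nat, (1 <= T)%N ->
    {ae P, forall w, exists N : nat, forall M : nat, (N <= M)%N ->
        (\sum_(1 <= x < M.+1) V x T w)%N = T}.
Proof.
move=> /andP[q0 q1] hu [e1 e10 he1] [e2 e20 he2] mV mH hP T T1.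
have hPb : forall N v h, P (boxev V H N T v h) = (box_weight q u a nu N T v h)%:E.
  by move=> N v h; exact: hP.
pose ct t := e2 * (e1 / (e1 - u t)).
pose c := \prod_(1 <= t < T.+1) ct t.
have ct0 : forall t, (1 <= t)%N -> 0 < ct t.
  move=> t t1; have ut := hu t t1; apply: mulr_gt0 => //; apply: divr_gt0 => //; lra.
have ct1 : forall t, (1 <= t)%N -> ct t <= 1.
  move=> t t1; have ut := hu t t1; have /andP[? ?] := he2 1%N erefl.
  have h1 : e1 / (e1 - u t) <= 1 by rewrite ler_pdivrMr ?mul1r; lra.
  have h0 : 0 <= e1 / (e1 - u t) by apply: divr_ge0; lra.
  rewrite -[1]mul1r; apply: ler_pM => //; lra.
have c0 : 0 < c.
  by rewrite /c big_nat_cond; apply: prodr_gt0 => t /andP[/andP[t1 _] _]; exact: ct0.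
have c1 : c <= 1.
  rewrite /c big_nat_cond; apply: prodr_ile1 => t /andP[/andP[t1 _] _].
  by apply/andP; split; [exact/ltW/ct0|exact: ct1].
pose A K := [set w | forall x, (1 <= x <= K)%N -> exists2 t, (1 <= t <= T)%N & H x t w != 0%N].
pose Zc K := [set w | forall t, (1 <= t <= T)%N -> H K.+1 t w = 0%N].
have bA : forall K, bdet V H K T (A K).
  move=> K w w' ag Aw x hx; have [t ht Hne] := Aw x hx; exists t => //.
  by have [_ ->] := ag x t hx ht.
have bZ : forall K, bdet V H K.+1 T (Zc K).
  move=> K w w' ag Zw t ht; have [_ ->] := ag K.+1 t ltac:(lia) ht; exact: Zw.
have mA K : measurable (A K) := bdet_meas mV mH (bA K).
have mZ K : measurable (Zc K) := bdet_meas mV mH (bZ K).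
have key : forall K, (c%:E * P (A K) <= P (A K `&` Zc K))%E.
  move=> K.
  rewrite (part_sum P mV mH K T (mA K)) (part_sum P mV mH K T (measurableI _ _ (mA K) (mZ K))).
  rewrite -nneseriesZl; last by move=> n _; exact: measure_ge0.
  apply: lee_nneseries => [n _ _|n _]; first by apply: mule_ge0 => //; rewrite lee_fin ltW.
  have [[w0 [Aw0 aw0]]|no] := pselect (exists w0, (A K `&` atom V H K T n) w0); last first.
    have -> : A K `&` atom V H K T n = set0.
      by apply/seteqP; split => w // hw; exfalso; apply: no; exists w.
    by rewrite measure0 mule0 measure_ge0.
  have E1 : A K `&` atom V H K T n = boxev V H K T (fun x t => V x t w0) (fun x t => H x t w0).
    rewrite -(atomE aw0); apply/seteqP; split => w; first by case.
    move=> aw; split => //; rewrite (atomE aw0) in aw; exact: (bA K w0 w aw Aw0).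
  rewrite E1 hPb.
  pose h' x t := if (x <= K)%N then H x t w0 else 0%N.
  pose jin t := in_left h' K.+1 t.
  pose vcol t := (\sum_(1 <= s < t.+1) jin s)%N.
  pose v' x t := if (x <= K)%N then V x t w0 else vcol t.
  have sub : boxev V H K.+1 T v' h' `<=` (A K `&` Zc K) `&` atom V H K T n.
    move=> w hw.
    have ag : agree V H K T w0 w.
      move=> x t hx ht; have [-> ->] := hw x t ltac:(lia) ht.
      have xK : (x <= K)%N by lia.
      by rewrite /v' /h' xK.
    have aw : atom V H K T n w by rewrite (atomE aw0); exact: ag.
    split; [split|] => //.
    - exact: (bA K w0 w ag Aw0).
    - move=> t ht; have [_ ->] := hw K.+1 t ltac:(lia) ht; by rewrite /h' ltnn.
  have mB : measurable (boxev V H K.+1 T v' h') := boxev_meas mV mH _ _ _ _.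
  have le1 : (P (boxev V H K.+1 T v' h') <= P ((A K `&` Zc K) `&` atom V H K T n))%E.
    apply: le_measure => //; rewrite inE //.
    by apply: measurableI; [apply: measurableI|exact: atom_meas].
  apply: le_trans le1; rewrite hPb.
  have split_bw : box_weight q u a nu K.+1 T v' h' = box_weight q u a nu K T v' h' *
     \prod_(1 <= t < T.+1) Lweight q (u t) (a K.+1) (nu K.+1) (in_below v' K.+1 t)
        (in_left h' K.+1 t) (v' K.+1 t) (h' K.+1 t).
    by rewrite /box_weight big_nat_recr.
  have ext : box_weight q u a nu K T v' h' =
      box_weight q u a nu K T (fun x t => V x t w0) (fun x t => H x t w0).
    apply: box_weight_ext => x t hx ht; have xK : (x <= K)%N by lia.
    by rewrite /v' /h' xK.
  rewrite split_bw ext.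
  set bw := box_weight q u a nu K T _ _.
  have bw0 : 0 <= bw.
    have : (0 <= P (boxev V H K T (fun x t => V x t w0) (fun x t => H x t w0)))%E.
      exact: measure_ge0.
    by rewrite hPb lee_fin.
  rewrite -EFinM lee_fin.
  have [allj|] := pselect (forall t, (1 <= t <= T)%N -> (jin t <= 1)%N).
    rewrite mulrC; apply: ler_wpM2l => //.
    rewrite /c big_nat_cond [X in _ <= X]big_nat_cond; apply: ler_prod => t /andP[/andP[t1 tT] _].
    apply/andP; split; first exact/ltW/ct0.
    have ht : (1 <= t <= T)%N by lia.
    have ib : in_below v' K.+1 t = vcol t.-1.
      rewrite /in_below; case: eqP => [->|t1']; first by rewrite /vcol big_geq.
      by rewrite /v' ltnn.
    have vc : v' K.+1 t = (vcol t.-1 + jin t)%N.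
      rewrite /v' ltnn /vcol; case: t t1 {tT ht ib} => [//|t'] _ /=.
      case: t' => [|t'']; first by rewrite big_nat1 big_geq.
      by rewrite big_nat_recr.
    rewrite ib vc (_ : h' K.+1 t = 0%N); last by rewrite /h' ltnn.
    apply: Lw_lb.
    - by rewrite q0 q1.
    - exact: hu.
    - exact: e10.
    - exact: he1.
    - exact: e20.
    - exact: he2.
    - exact: allj.
  move/existsNP => [t /not_implyP [ht /negP]]; rewrite -ltnNge => j2.
  have K1 : (1 <= K)%N by move: j2; rewrite /jin /in_left; case: (K).
  have hj : jin t = H K t w0.
    by rewrite /jin /in_left /h' leqnn; case: (K) K1.
  have bw00 : bw = 0.
    apply: (@box_weight_eq0 _ q u a nu K T _ _ K t) => //; first by lia.
    by apply: Lweight_j2; rewrite -hj.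
  by rewrite bw00 mulr0 mul0r.
have decay : forall K, (P (A K) <= ((1 - c) ^+ K)%:E)%E.
  elim=> [|K IH].
    by rewrite expr0; apply: probability_le1.
  have eqU : A K = A K.+1 `|` (A K `&` Zc K).
    apply/seteqP; split => w.
    - move=> Aw; have [Zw|nZw] := pselect (Zc K w); [by right|left].
      move=> x hx; have [xK|xK] := leqP x K; first by apply: Aw; lia.
      have -> : x = K.+1 by lia.
      move/existsNP: nZw => [t /not_implyP [ht Hne]]; exists t => //; by apply/eqP.
    - by case=> [AK1|[]//] x hx; apply: AK1; lia.
  have disj : A K.+1 `&` (A K `&` Zc K) = set0.
    apply/seteqP; split => w // [AK1 [_ Zw]].
    have [t ht Hne] := AK1 K.+1 ltac:(lia); by move: Hne; rewrite Zw.
  have mAZ := measurableI _ _ (mA K) (mZ K).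
  have PU := measureU P (mA K.+1) mAZ disj; rewrite -eqU in PU.
  have kK := key K.
  move: PU kK IH.
  set x1 := P (A K). set x2 := P (A K.+1). set x3 := P (A K `&` Zc K).
  move=> PU kK IH.
  have PU' : x1 = (x2 + x3)%E := PU.
  have f1 : x1 \is a fin_num := fin_num_measure P _ (mA K).
  have f2 : x2 \is a fin_num := fin_num_measure P _ (mA K.+1).
  have f3 : x3 \is a fin_num := fin_num_measure P _ mAZ.
  have g1 : (0 <= x1)%E := measure_ge0 P _.
  clear PU; move: PU' kK IH.
  rewrite -(fineK f1) -(fineK f2) -(fineK f3).
  rewrite -EFinD -EFinM !lee_fin => -[PU] kK IH.
  have ge0 : 0 <= fine x1 by apply: fine_ge0.
  have : (1 - c) * fine x1 <= (1 - c) * (1 - c) ^+ K by apply: ler_wpM2l => //; lra.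
  rewrite exprS; lra.
have mAll : measurable (\bigcap_K A K) := bigcapT_measurable mA.
have P0 : P (\bigcap_K A K) = 0%E.
  have le K : (P (\bigcap_K A K) <= ((1 - c) ^+ K)%:E)%E.
    apply: le_trans (decay K); apply: le_measure; rewrite ?inE //.
    by move=> w /(_ K I).
  have fin : P (\bigcap_K A K) \is a fin_num := fin_num_measure P _ mAll.
  have g0 : (0 <= P (\bigcap_K A K))%E := measure_ge0 P _.
  move: le fin g0; set p := P _ => le fin g0.
  rewrite -(fineK fin); congr (_%:E).
  have p0 : 0 <= fine p by apply: fine_ge0.
  apply: le_anti; rewrite p0 andbT leNgt; apply/negP => pp.
  have r1 : `|1 - c| < 1 by rewrite ger0_norm; lra.
  have [K HK] := filter_ex (cvgr_lt 0 (cvg_expr r1) _ pp).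
  have := le K; rewrite -(fineK fin) lee_fin /=.
  move: HK => /=; lra.
pose Zb M := [set w | box_weight q u a nu M T (fun x t => V x t w) (fun x t => H x t w) = 0].
have bZb M : bdet V H M T (Zb M).
  move=> w w' ag Zw; rewrite /Zb /= -Zw; apply: box_weight_ext => x t hx ht; exact: ag x t hx ht.
have PZb M : P (Zb M) = 0%E.
  rewrite (part_sum P mV mH M T (bdet_meas mV mH (bZb M))).
  apply: eseries0 => n _ _.
  have [[w0 [Zw0 aw0]]|no] := pselect (exists w0, (Zb M `&` atom V H M T n) w0); last first.
    have -> : Zb M `&` atom V H M T n = set0.
      by apply/seteqP; split => w // hw; exfalso; apply: no; exists w.
    exact: measure0.
  apply/eqP; rewrite eq_le measure_ge0 andbT.
  apply: le_trans (measureIr P (bdet_meas mV mH (bZb M)) (atom_meas mV mH M T n)) _.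
  have Zw0' : box_weight q u a nu M T (fun x t => V x t w0) (fun x t => H x t w0) = 0 := Zw0.
  have e := hPb M (fun x t => V x t w0) (fun x t => H x t w0); rewrite Zw0' in e.
  rewrite (atomE aw0) le_eqVlt; apply/orP; left; apply/eqP; exact: e.
apply: (@negligibleS _ _ _ _ ((\bigcap_K A K) `|` \bigcup_M Zb M)).
  move=> w /= ng.
  have [hA|hA] := pselect ((\bigcap_K A K) w); [by left|right].
  have [//|hZ] := pselect ((\bigcup_M Zb M) w); exfalso; apply: ng.
  have [K nAK] : exists K, ~ A K w.
    by apply/existsNP => all; apply: hA => K _; exact: all K.
  have [x [hx hz]] : exists x, (1 <= x <= K)%N /\ forall t, (1 <= t <= T)%N -> H x t w = 0%N.
    apply: contrapT => nx; apply: nAK => x hx; apply: contrapT => nt; apply: nx.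
    exists x; split => // t ht.
    by case: (eqVneq (H x t w) 0%N) => // ne; exfalso; apply: nt; exists t.
  exists x => M hM.
  have cons : forall x' t, (1 <= x' <= M)%N -> (1 <= t <= T)%N ->
     (in_below (fun x t => V x t w) x' t + in_left (fun x t => H x t w) x' t =
      (fun x t => V x t w) x' t + (fun x t => H x t w) x' t)%N.
    move=> x' t hx' ht; apply: (@Lweight_cons R q (u t) (a x') (nu x')).
    apply/eqP => L0; apply: hZ; exists M => //; exact: (@box_weight_eq0 R q u a nu M T _ _ x' t hx' ht L0).
  have z : forall k, (x + k <= M)%N -> (\sum_(1 <= t < T.+1) H (x + k) t w = 0)%N.
    elim=> [|k IH] hk.
      by rewrite addn0 big_nat_cond big1 // => t /andP[ht _]; apply: hz; lia.
    rewrite addnS; apply: (@zero_prop (fun x t => V x t w) (fun x t => H x t w) (x + k) T T1).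
    - lia.
    - move=> t ht; apply: cons => //; lia.
    - apply: IH; lia.
  have s := @sum_id (fun x t => V x t w) (fun x t => H x t w) M T T1 ltac:(lia) cons.
  have := z (M - x)%N ltac:(lia); rewrite subnKC; last by lia.
  simpl in s; lia.
apply: negligibleU.
  by exists (\bigcap_K A K); split.
apply: negligible_bigcup => M; exists (Zb M); split => //.
  exact: (bdet_meas mV mH (bZb M)).
exact: PZb.
Qed.
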